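(* Let $\lambda=(\lambda_k)_{k\in\mathbb N}\in\ell^\infty(\mathbb N)$ and define $T_\lambda:\ell^\infty(\mathbb N)\to\ell^\infty(\mathbb N)$ by $T_\lambda(x_1,x_2,\ldots)=(\lambda_1x_1,\lambda_2x_2,\ldots)$. The following are equivalent: (i) $T_\lambda$ is recurrent; (ii) $T_\lambda$ is rigid; (iii) $T_\lambda$ is uniformly rigid; (iv) there is a sequence $(\theta_k)_{k\in\mathbb N}\subset\mathbb R$ with $\lambda_k=e^{2\pi i\theta_k}$ for every $k$, and $\liminf_{n\to\infty}\sup_{k\in\mathbb N}|e^{2\pi i n\theta_k}-1|=0$.
   Context: An operator $T$ on a Banach space $X$ is recurrent if for every non-empty open $U\subset X$ there is a positive integer $k$ with $U\cap T^{-k}(U)\neq\emptyset$; rigid if there is an increasing sequence of positive integers $(k_n)$ with $T^{k_n}x\to x$ for all $x\in X$; uniformly rigid if there is an increasing sequence of positive integers $(k_n)$ with $\|T^{k_n}-I\|\to0$. *)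

(* Defs.v *)
From Stdlib Require Import Reals.
From Coquelicot Require Import Coquelicot.
Open Scope R_scope.

(* Complex-valued sequences; l^oo(N) = the linf_bounded ones. *)
Definition seqC := nat -> C.

Definition linf_bounded (x : seqC) : Prop := exists M : R, forall k, Cmod (x k) <= M.

Definition linf_norm (x : seqC) : R := real (Sup_seq (fun k => Finite (Cmod (x k)))).

Definition seq_sub (x y : seqC) : seqC := fun k => Cminus (x k) (y k).

Definition linf_open (U : seqC -> Prop) : Prop :=
  (forall x, U x -> linf_bounded x) /\
  (forall x, U x -> exists eps : R, 0 < eps /\
      forall y, linf_bounded y -> linf_norm (seq_sub y x) < eps -> U y).

Definition op_norm (A : seqC -> seqC) : R :=
  real (Lub_Rbar (fun r => exists x, linf_bounded x /\ linf_norm x <= 1 /\ r = linf_norm (A x))).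

Definition T_diag (lam : seqC) (x : seqC) : seqC := fun k => Cmult (lam k) (x k).

Definition iterT (T : seqC -> seqC) (n : nat) (x : seqC) : seqC := Nat.iter n T x.

Definition recurrent (T : seqC -> seqC) : Prop :=
  forall U : seqC -> Prop, linf_open U -> (exists x, U x) ->
    exists k : nat, (0 < k)%nat /\ exists x, U x /\ U (iterT T k x).

Definition increasing_pos (kn : nat -> nat) : Prop :=
  (0 < kn 0)%nat /\ forall n, (kn n < kn (S n))%nat.

Definition rigid (T : seqC -> seqC) : Prop :=
  exists kn : nat -> nat, increasing_pos kn /\
    forall x, linf_bounded x ->
      is_lim_seq (fun n => linf_norm (seq_sub (iterT T (kn n) x) x)) 0.

Definition uniformly_rigid (T : seqC -> seqC) : Prop :=
  exists kn : nat -> nat, increasing_pos kn /\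
    is_lim_seq (fun n => op_norm (fun x => seq_sub (iterT T (kn n) x) x)) 0.

Definition cis (t : R) : C := (cos t, sin t).

(* Main.v *)
Require Import Defs.
From Stdlib Require Import Reals Lra Lia Psatz ClassicalEpsilon.
From Coquelicot Require Import Coquelicot.
Open Scope R_scope.

Lemma linf_spec (x : seqC) (M : R) : (forall k, Cmod (x k) <= M) ->
  (forall k, Cmod (x k) <= linf_norm x) /\ linf_norm x <= M.
Proof.
  intros H. unfold linf_norm.
  set (u := fun k => Finite (Cmod (x k))).
  assert (H1 : forall k, Rbar_le (Cmod (x k)) (Sup_seq u)).
  { intro k. apply Sup_seq_minor_le with k. simpl. lra. }
  assert (H2 : Rbar_le (Sup_seq u) M).
  { apply Rbar_not_lt_le. intro Hc. apply Sup_seq_minor_lt in Hc.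
    destruct Hc as [n Hn]. simpl in Hn. specialize (H n). lra. }
  destruct (Sup_seq u) as [s| |] eqn:E; simpl in *.
  - split; auto.
  - contradiction.
  - specialize (H1 O). contradiction.
Qed.

Lemma linf_ge (x : seqC) k : linf_bounded x -> Cmod (x k) <= linf_norm x.
Proof. intros [M HM]. apply (linf_spec x M HM). Qed.

Lemma linf_le (x : seqC) M : (forall k, Cmod (x k) <= M) -> linf_norm x <= M.
Proof. intros HM. apply (linf_spec x M HM). Qed.

Lemma linf_nonneg (x : seqC) : linf_bounded x -> 0 <= linf_norm x.
Proof. intros Hb. eapply Rle_trans. apply Cmod_ge_0. apply (linf_ge x O Hb). Qed.

Fixpoint cpow (a : C) (n : nat) : C :=
  match n with O => RtoC 1 | S n => Cmult a (cpow a n) end.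

Lemma iterT_eq lam n x k : iterT (T_diag lam) n x k = Cmult (cpow (lam k) n) (x k).
Proof.
  induction n; simpl.
  - unfold iterT. simpl. ring.
  - unfold iterT in *. simpl. unfold T_diag at 1. rewrite IHn. ring.
Qed.

Lemma cpow_add a m n : cpow a (m + n) = Cmult (cpow a m) (cpow a n).
Proof. induction m; simpl. ring. rewrite IHm. ring. Qed.

Lemma Cmod_cpow a n : Cmod (cpow a n) = Cmod a ^ n.
Proof. induction n; simpl. apply Cmod_1. rewrite Cmod_mult, IHn. ring. Qed.

Lemma cis_add a b : cis (a + b) = Cmult (cis a) (cis b).
Proof. unfold cis, Cmult; simpl. rewrite cos_plus, sin_plus. f_equal; ring. Qed.

Lemma cis_pow t n : cis (INR n * t) = cpow (cis t) n.
Proof.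
  induction n; simpl cpow.
  - unfold cis. change (INR 0) with 0. rewrite Rmult_0_l, cos_0, sin_0. reflexivity.
  - rewrite S_INR. replace ((INR n + 1) * t) with (t + INR n * t) by ring.
    rewrite cis_add, IHn. reflexivity.
Qed.

Lemma Cmod_cis t : Cmod (cis t) = 1.
Proof.
  unfold Cmod, cis; simpl. replace (cos t * (cos t * 1) + sin t * (sin t * 1)) with 1.
  apply sqrt_1. pose proof (sin2_cos2 t). unfold Rsqr in H. lra.
Qed.

Lemma Cmod_sub_ge a b : Cmod a - Cmod b <= Cmod (Cminus a b).
Proof.
  pose proof (Cmod_triangle (Cminus a b) b).
  replace (Cplus (Cminus a b) b) with a in H by ring. lra.
Qed.

Lemma cis_of_mod1 (z : C) : Cmod z = 1 -> exists t, z = cis t.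
Proof.
  destruct z as [a b]. unfold Cmod; simpl. intro H.
  assert (Hs : a * (a * 1) + b * (b * 1) = 1).
  { assert (H0 : 0 <= a * (a * 1) + b * (b * 1)) by nra.
    pose proof (sqrt_sqrt _ H0) as H1. rewrite H in H1. lra. }
  assert (Ha : -1 <= a <= 1) by nra.
  destruct (Rle_or_lt 0 b) as [Hb|Hb].
  - exists (acos a). unfold cis. rewrite cos_acos, sin_acos; auto. f_equal.
    symmetry. apply sqrt_lem_1; unfold Rsqr; nra.
  - exists (- acos a). unfold cis. rewrite cos_neg, sin_neg, cos_acos, sin_acos; auto. f_equal.
    assert (b = - sqrt (1 - a²)); [|lra].
    assert (sqrt (1 - a²) = - b); [|lra].
    apply sqrt_lem_1; unfold Rsqr; nra.
Qed.

Lemma Cmod_sub_tri a b c : Cmod (Cminus a c) <= Cmod (Cminus a b) + Cmod (Cminus b c).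
Proof.
  pose proof (Cmod_triangle (Cminus a b) (Cminus b c)).
  replace (Cplus (Cminus a b) (Cminus b c)) with (Cminus a c) in H by ring. exact H.
Qed.

Lemma Cmod_sub_le a b : Cmod (Cminus a b) <= Cmod a + Cmod b.
Proof. unfold Cminus. rewrite <- (Cmod_opp b). apply Cmod_triangle. Qed.

Lemma Cmod_sub_sym a b : Cmod (Cminus a b) = Cmod (Cminus b a).
Proof. replace (Cminus a b) with (Copp (Cminus b a)) by ring. apply Cmod_opp. Qed.

Lemma lim0c (u : nat -> R) (C : R) : 0 <= C ->
  (forall n, 0 <= u n <= C * / (INR n + 1)) -> is_lim_seq u 0.
Proof.
  intros HC H. apply is_lim_seq_spec. intros [eps Heps]. simpl.
  destruct (INR_unbounded (C / eps)) as [N HN]. exists N. intros n Hn.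
  apply le_INR in Hn. specialize (H n).
  assert (Hp : 0 < INR n + 1) by (pose proof (pos_INR n); lra).
  assert (Hq : / (INR n + 1) * (INR n + 1) = 1) by (field; lra).
  assert (Hq0 : 0 < / (INR n + 1)) by (apply Rinv_0_lt_compat; lra).
  assert (He : C / eps * eps = C) by (field; lra).
  rewrite Rminus_0_r, Rabs_pos_eq by lra.
  assert (C < eps * (INR n + 1)) by nra. nra.
Qed.

Definition Good (lam : nat -> C) (e : R) (k : nat) :=
  forall j, Cmod (Cminus (cpow (lam j) k) (RtoC 1)) <= e.

Definition oneS : seqC := fun _ => RtoC 1.

Lemma bounded_sub x y : linf_bounded x -> linf_bounded y -> linf_bounded (seq_sub x y).
Proof.
  intros [M1 H1] [M2 H2]. exists (M1 + M2). intro k. unfold seq_sub.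
  eapply Rle_trans. apply Cmod_sub_le. specialize (H1 k); specialize (H2 k); lra.
Qed.

Lemma oneS_bounded : linf_bounded oneS.
Proof. exists 1. intro. unfold oneS. rewrite Cmod_1. lra. Qed.

Lemma iter_bounded lam n x : linf_bounded lam -> linf_bounded x ->
  linf_bounded (iterT (T_diag lam) n x).
Proof.
  intros [Ma Ha] [Mx Hx]. exists (Ma ^ n * Mx). intro k. rewrite iterT_eq, Cmod_mult, Cmod_cpow.
  assert (0 <= Cmod (lam k)) by apply Cmod_ge_0.
  assert (0 <= Cmod (x k)) by apply Cmod_ge_0.
  apply Rmult_le_compat; auto. apply pow_le; auto. apply pow_incr. split; auto.
Qed.

Lemma rec_weak lam : recurrent (T_diag lam) ->
  forall e, 0 < e -> exists k, (0 < k)%nat /\ Good lam e k.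
Proof.
  intros HR e He.
  set (eta := Rmin e 1 / 4).
  assert (0 < Rmin e 1) by (apply Rmin_glb_lt; lra).
  pose proof (Rmin_l e 1). pose proof (Rmin_r e 1).
  assert (Heta : 0 < eta) by (unfold eta; lra).
  assert (Heta2 : eta <= e / 4 /\ eta <= 1/4) by (unfold eta; lra).
  set (U := fun y => linf_bounded y /\ linf_norm (seq_sub y oneS) < eta).
  destruct (HR U) as [k [Hk [y [Uy Uy2]]]].
  - split. intros x [Hx _]; exact Hx.
    intros x [Hxb Hx]. exists (eta - linf_norm (seq_sub x oneS)). split. lra.
    intros z Hz Hzx. split; auto.
    assert (linf_norm (seq_sub z oneS) <= linf_norm (seq_sub z x) + linf_norm (seq_sub x oneS)); [|lra].
    apply linf_le. intro j. unfold seq_sub at 1.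
    eapply Rle_trans. apply (Cmod_sub_tri _ (x j)).
    apply Rplus_le_compat; apply (linf_ge (seq_sub _ _) j); apply bounded_sub; auto; apply oneS_bounded.
  - exists oneS. split. apply oneS_bounded.
    eapply Rle_lt_trans; [|exact Heta]. apply linf_le. intro. unfold seq_sub, oneS.
    replace (Cminus 1 1) with (RtoC 0) by ring. rewrite Cmod_0. lra.
  - exists k. split; auto. intro j.
    destruct Uy as [Hyb Hy]. destruct Uy2 as [Hyb2 Hy2].
    pose proof (linf_ge _ j (bounded_sub _ _ Hyb oneS_bounded)) as A1.
    pose proof (linf_ge _ j (bounded_sub _ _ Hyb2 oneS_bounded)) as A2.
    unfold seq_sub, oneS in A1, A2, Hy, Hy2. rewrite iterT_eq in A2.
    set (a := cpow (lam j) k) in *.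
    assert (B : Cmod (Cminus (Cmult a (y j)) (y j)) <= Cmod (Cminus (Cmult a (y j)) 1) + Cmod (Cminus 1 (y j))) by apply Cmod_sub_tri.
    rewrite (Cmod_sub_sym 1 (y j)) in B.
    replace (Cminus (Cmult a (y j)) (y j)) with (Cmult (Cminus a 1) (y j)) in B by ring.
    rewrite Cmod_mult in B.
    assert (D : Cmod 1 - Cmod (y j) <= Cmod (Cminus 1 (y j))) by apply Cmod_sub_ge.
    rewrite Cmod_1, Cmod_sub_sym in D.
    assert (0 <= Cmod (Cminus a 1)) by apply Cmod_ge_0.
    assert (E1 : Cmod (Cminus a 1) * Cmod (y j) < e / 2) by lra.
    assert (E2 : 3/4 < Cmod (y j)) by lra.
    nra.
Qed.

Lemma pow_dist r k : 0 <= r -> (0 < k)%nat -> Rabs (r - 1) <= Rabs (r ^ k - 1).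
Proof.
  intros Hr Hk. destruct k as [|k]; [lia|].
  destruct (Rle_or_lt 1 r).
  - assert (r ^ 1 <= r ^ S k) by (apply Rle_pow; auto; lia). rewrite pow_1 in H0.
    rewrite !Rabs_pos_eq; lra.
  - assert (r ^ k <= 1 ^ k) by (apply pow_incr; lra). rewrite pow1 in H0.
    simpl. assert (0 <= r ^ k) by (apply pow_le; lra).
    rewrite !Rabs_left1; nra.
Qed.

Lemma weak_mod1 lam : (forall e, 0 < e -> exists k, (0 < k)%nat /\ Good lam e k) ->
  forall j, Cmod (lam j) = 1.
Proof.
  intros H j. destruct (Req_dec (Cmod (lam j)) 1) as [|Hne]; auto. exfalso.
  set (r := Cmod (lam j)).
  assert (Hd : 0 < Rabs (r - 1)) by (apply Rabs_pos_lt; unfold r in *; lra).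
  destruct (H (Rabs (r - 1) / 2)) as [k [Hk HG]]. lra.
  specialize (HG j).
  pose proof (pow_dist r k (Cmod_ge_0 _) Hk).
  assert (Rabs (r ^ k - 1) <= Cmod (Cminus (cpow (lam j) k) 1)).
  { unfold r. rewrite <- Cmod_cpow. apply Rabs_le. split.
    - pose proof (Cmod_sub_ge 1 (cpow (lam j) k)). rewrite Cmod_1, Cmod_sub_sym in H1. lra.
    - pose proof (Cmod_sub_ge (cpow (lam j) k) 1). rewrite Cmod_1 in H1. lra. }
  lra.
Qed.

Lemma Good_add lam e1 e2 k l : (forall j, Cmod (lam j) <= 1) ->
  Good lam e1 k -> Good lam e2 l -> Good lam (e1 + e2) (k + l).
Proof.
  intros Hm H1 H2 j. rewrite cpow_add.
  replace (Cminus (Cmult (cpow (lam j) k) (cpow (lam j) l)) 1) with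
    (Cplus (Cmult (cpow (lam j) k) (Cminus (cpow (lam j) l) 1)) (Cminus (cpow (lam j) k) 1)) by ring.
  eapply Rle_trans. apply Cmod_triangle. rewrite Cmod_mult, Cmod_cpow.
  specialize (H1 j); specialize (H2 j).
  assert (0 <= Cmod (lam j) ^ k <= 1).
  { split. apply pow_le, Cmod_ge_0. rewrite <- (pow1 k). apply pow_incr. split; auto. apply Cmod_ge_0. }
  assert (0 <= Cmod (Cminus (cpow (lam j) l) 1)) by apply Cmod_ge_0. nra.
Qed.

Lemma Good_mul lam e k m : (forall j, Cmod (lam j) <= 1) ->
  Good lam e k -> Good lam (INR (S m) * e) (S m * k).
Proof.
  intros Hm H. induction m.
  - simpl. rewrite Nat.add_0_r. replace (1 * e) with e by ring. auto.
  - replace (INR (S (S m)) * e) with (e + INR (S m) * e) by (rewrite (S_INR (S m)); ring).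
    replace (S (S m) * k)%nat with (k + S m * k)%nat by lia. apply Good_add; auto.
Qed.

Definition PP lam := forall e, 0 < e -> forall N, exists k, (N < k)%nat /\ Good lam e k.

Lemma weak_PP lam : (forall e, 0 < e -> exists k, (0 < k)%nat /\ Good lam e k) -> PP lam.
Proof.
  intros H e He N. pose proof (weak_mod1 lam H) as Hm.
  assert (Hm' : forall j, Cmod (lam j) <= 1) by (intro j; rewrite Hm; lra).
  assert (HN : 0 < INR (S N)) by (apply lt_0_INR; lia).
  destruct (H (e / INR (S N))) as [k [Hk HG]]. apply Rdiv_lt_0_compat; auto.
  exists (S N * k)%nat. split. nia.
  pose proof (Good_mul lam _ k N Hm' HG).
  replace (INR (S N) * (e / INR (S N))) with e in H0 by (field; lra). exact H0.
Qed.

Lemma PP_weak lam : PP lam -> forall e, 0 < e -> exists k, (0 < k)%nat /\ Good lam e k.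
Proof. intros H e He. destruct (H e He O) as [k [Hk HG]]. eauto. Qed.

Lemma PP_seq lam : PP lam -> exists kn, increasing_pos kn /\ forall n, Good lam (/ (INR n + 1)) (kn n).
Proof.
  intros H.
  assert (H' : forall n N, {k | (N < k)%nat /\ Good lam (/ (INR n + 1)) k}).
  { intros n N. apply constructive_indefinite_description. apply H.
    apply Rinv_0_lt_compat. pose proof (pos_INR n). lra. }
  set (f := fun n N => proj1_sig (H' n N)).
  assert (Hf : forall n N, (N < f n N)%nat /\ Good lam (/ (INR n + 1)) (f n N)).
  { intros. unfold f. destruct (H' n N); auto. }
  set (kn := fix g (n : nat) : nat := match n with O => f O O | S m => f (S m) (g m) end).
  exists kn. split. split.
  - simpl. apply Hf.
  - intro n. simpl. apply Hf.
  - intro n. destruct n; simpl; apply Hf.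
Qed.

Lemma linf_zero (x : seqC) : (forall k, x k = RtoC 0) -> linf_norm x = 0.
Proof.
  intro H. apply Rle_antisym.
  - apply linf_le. intro k. rewrite H, Cmod_0. lra.
  - apply linf_nonneg. exists 0. intro k. rewrite H, Cmod_0. lra.
Qed.

Lemma op_upper lam k d : 0 <= d -> Good lam d k ->
  0 <= op_norm (fun x => seq_sub (iterT (T_diag lam) k x) x) <= d.
Proof.
  intros Hd HG. unfold op_norm.
  destruct (Lub_Rbar_correct (fun r => exists x, linf_bounded x /\ linf_norm x <= 1 /\
      r = linf_norm (seq_sub (iterT (T_diag lam) k x) x))) as [Hub Hleast].
  set (L := Lub_Rbar _) in *.
  assert (A : Rbar_le L d).
  { apply Hleast. intros r [x [Hxb [Hx1 Hr]]]. rewrite Hr. simpl. apply linf_le. intro j.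
    unfold seq_sub. rewrite iterT_eq.
    replace (Cminus (Cmult (cpow (lam j) k) (x j)) (x j)) with (Cmult (Cminus (cpow (lam j) k) 1) (x j)) by ring.
    rewrite Cmod_mult. pose proof (linf_ge x j Hxb). specialize (HG j).
    pose proof (Cmod_ge_0 (x j)). pose proof (Cmod_ge_0 (Cminus (cpow (lam j) k) 1)). nra. }
  assert (B : Rbar_le 0 L).
  { apply Hub. exists (fun _ => RtoC 0). split. exists 0. intro. rewrite Cmod_0; lra.
    split. rewrite linf_zero; auto. lra.
    rewrite linf_zero; auto. intro j. unfold seq_sub. rewrite iterT_eq. ring. }
  destruct L as [l| |]; simpl in *; try contradiction. lra.
Qed.

Lemma op_lower lam k j : linf_bounded lam ->
  Cmod (Cminus (cpow (lam j) k) 1) <= op_norm (fun x => seq_sub (iterT (T_diag lam) k x) x).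
Proof.
  intros Hlam. unfold op_norm.
  destruct (Lub_Rbar_correct (fun r => exists x, linf_bounded x /\ linf_norm x <= 1 /\
      r = linf_norm (seq_sub (iterT (T_diag lam) k x) x))) as [Hub Hleast].
  set (L := Lub_Rbar _) in *.
  destruct Hlam as [Ma Ha].
  assert (HMa : 0 <= Ma) by (eapply Rle_trans; [apply (Cmod_ge_0 (lam O))| apply Ha]).
  assert (A : Rbar_le L (Ma ^ k + 1)).
  { apply Hleast. intros r [x [Hxb [Hx1 Hr]]]. rewrite Hr. simpl. apply linf_le. intro j'.
    unfold seq_sub. rewrite iterT_eq. eapply Rle_trans. apply Cmod_sub_le.
    rewrite Cmod_mult, Cmod_cpow. pose proof (linf_ge x j' Hxb).
    pose proof (Cmod_ge_0 (x j')).
    assert (Cmod (lam j') ^ k <= Ma ^ k) by (apply pow_incr; split; [apply Cmod_ge_0|auto]).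
    assert (0 <= Cmod (lam j') ^ k) by (apply pow_le, Cmod_ge_0). nra. }
  assert (Hb : linf_bounded (seq_sub (iterT (T_diag lam) k oneS) oneS)).
  { apply bounded_sub. apply iter_bounded. exists Ma; auto. apply oneS_bounded. apply oneS_bounded. }
  assert (B : Rbar_le (linf_norm (seq_sub (iterT (T_diag lam) k oneS) oneS)) L).
  { apply Hub. exists oneS. split. apply oneS_bounded. split; auto.
    apply linf_le. intro. unfold oneS. rewrite Cmod_1. lra. }
  pose proof (linf_ge _ j Hb) as C. unfold seq_sub at 1 in C. rewrite iterT_eq in C.
  unfold oneS at 1 2 in C. replace (Cmult (cpow (lam j) k) 1) with (cpow (lam j) k) in C by ring.
  destruct L as [l| |]; simpl in *; try contradiction. lra.
Qed.

Definition GG lam := exists kn, increasing_pos kn /\ forall n, Good lam (/ (INR n + 1)) (kn n).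

Lemma inc_ge kn : increasing_pos kn -> forall n, (S n <= kn n)%nat.
Proof. intros [H0 HS] n. induction n. lia. specialize (HS n). lia. Qed.

Lemma inv_pos n : 0 < / (INR n + 1).
Proof. apply Rinv_0_lt_compat. pose proof (pos_INR n). lra. Qed.

Lemma GG_UR lam : GG lam -> uniformly_rigid (T_diag lam).
Proof.
  intros [kn [Hinc HG]]. exists kn. split; auto.
  apply lim0c with 1. lra. intro n. rewrite Rmult_1_l.
  apply op_upper. left; apply inv_pos. apply HG.
Qed.

Lemma GG_Ri lam : linf_bounded lam -> GG lam -> rigid (T_diag lam).
Proof.
  intros Hlam [kn [Hinc HG]]. exists kn. split; auto. intros x Hx.
  apply lim0c with (linf_norm x). apply linf_nonneg; auto. intro n. split.
  - apply linf_nonneg. apply bounded_sub; auto. apply iter_bounded; auto.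
  - apply linf_le. intro j. unfold seq_sub. rewrite iterT_eq.
    replace (Cminus (Cmult (cpow (lam j) (kn n)) (x j)) (x j)) with (Cmult (Cminus (cpow (lam j) (kn n)) 1) (x j)) by ring.
    rewrite Cmod_mult. pose proof (linf_ge x j Hx). specialize (HG n j).
    pose proof (Cmod_ge_0 (x j)). pose proof (inv_pos n). pose proof (Cmod_ge_0 (Cminus (cpow (lam j) (kn n)) 1)). nra.
Qed.

Lemma Ri_R lam : linf_bounded lam -> rigid (T_diag lam) -> recurrent (T_diag lam).
Proof.
  intros Hlam [kn [Hinc HR]] U [HUb HUo] [x Ux].
  destruct (HUo x Ux) as [eps [Heps HU]].
  pose proof (HUb x Ux) as Hx.
  specialize (HR x Hx). apply is_lim_seq_spec in HR.
  destruct (HR (mkposreal eps Heps)) as [N HN]. specialize (HN N (le_n N)). simpl in HN.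
  exists (kn N). split. pose proof (inc_ge kn Hinc N). lia.
  exists x. split; auto. apply HU. apply iter_bounded; auto.
  rewrite Rminus_0_r in HN. eapply Rle_lt_trans; [apply Rle_abs| exact HN].
Qed.

Lemma R_PP lam : recurrent (T_diag lam) -> PP lam.
Proof. intro H. apply weak_PP. apply rec_weak. auto. Qed.

Lemma UR_PP lam : linf_bounded lam -> uniformly_rigid (T_diag lam) -> PP lam.
Proof.
  intros Hlam [kn [Hinc HU]] e He N. apply is_lim_seq_spec in HU.
  destruct (HU (mkposreal e He)) as [N0 HN0]. simpl in HN0.
  exists (kn (max N N0)). split. pose proof (inc_ge kn Hinc (max N N0)). lia.
  intro j. specialize (HN0 (max N N0) (Nat.le_max_r _ _)).
  rewrite Rminus_0_r in HN0. pose proof (op_lower lam (kn (max N N0)) j Hlam).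
  pose proof (Rle_abs (op_norm (fun x => seq_sub (iterT (T_diag lam) (kn (max N N0)) x) x))). lra.
Qed.

Lemma cis_sub_bounded (f : nat -> R) : linf_bounded (fun k => Cminus (cis (f k)) (RtoC 1)).
Proof. exists 2. intro k. eapply Rle_trans. apply Cmod_sub_le. rewrite Cmod_cis, Cmod_1. lra. Qed.

Lemma IV_PP lam : (exists theta : nat -> R,
       (forall k, lam k = cis (2 * PI * theta k)) /\
       LimInf_seq (fun n => real (Sup_seq (fun k =>
           Finite (Cmod (Cminus (cis (2 * PI * INR n * theta k)) (RtoC 1)))))) = Finite 0) -> PP lam.
Proof.
  intros [theta [Hth HL]] e He N.
  destruct (ex_LimInf_seq (fun n => real (Sup_seq (fun k =>
           Finite (Cmod (Cminus (cis (2 * PI * INR n * theta k)) (RtoC 1))))))) as [l Hl].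
  pose proof (is_LimInf_seq_unique _ _ Hl) as E. rewrite HL in E. subst l.
  destruct (Hl (mkposreal e He)) as [H1 _]. simpl in H1.
  destruct (H1 (S N)) as [n [Hn Hv]]. exists n. split. lia.
  intro j. rewrite Hth, <- cis_pow.
  replace (INR n * (2 * PI * theta j)) with (2 * PI * INR n * theta j) by ring.
  pose proof (linf_ge _ j (cis_sub_bounded (fun k => 2 * PI * INR n * theta k))) as A.
  simpl in A. unfold linf_norm in A. lra.
Qed.

Lemma PP_IV lam : PP lam -> (exists theta : nat -> R,
       (forall k, lam k = cis (2 * PI * theta k)) /\
       LimInf_seq (fun n => real (Sup_seq (fun k =>
           Finite (Cmod (Cminus (cis (2 * PI * INR n * theta k)) (RtoC 1)))))) = Finite 0).
Proof.
  intros HP. pose proof (weak_mod1 lam (PP_weak lam HP)) as Hm.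
  assert (Ht : forall j, {t | lam j = cis t}).
  { intro j. apply constructive_indefinite_description. apply cis_of_mod1. auto. }
  exists (fun j => proj1_sig (Ht j) / (2 * PI)). split.
  - intro k. destruct (Ht k) as [t Ht']. simpl. rewrite Ht'. f_equal.
    pose proof PI_RGT_0. field. lra.
  - apply is_LimInf_seq_unique. intro eps. split.
    + intro N. destruct (HP (eps / 2)) with N as [k [Hk HG]]. pose proof (cond_pos eps). lra.
      exists k. split. lia. rewrite Rplus_0_l.
      assert (linf_norm (fun j => Cminus (cis (2 * PI * INR k * (proj1_sig (Ht j) / (2 * PI)))) (RtoC 1)) <= eps / 2).
      { apply linf_le. intro j. destruct (Ht j) as [t Ht']. simpl.
        replace (2 * PI * INR k * (t / (2 * PI))) with (INR k * t) by (pose proof PI_RGT_0; field; lra).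
        rewrite cis_pow, <- Ht'. apply HG. }
      unfold linf_norm in H. pose proof (cond_pos eps). lra.
    + exists O. intros n _.
      pose proof (linf_nonneg _ (cis_sub_bounded (fun j => 2 * PI * INR n * (proj1_sig (Ht j) / (2 * PI))))) as A.
      unfold linf_norm in A. pose proof (cond_pos eps). lra.
Qed.

Theorem theorem5p3 (lam : nat -> C) (hlam : linf_bounded lam) :
  (recurrent (T_diag lam) <-> rigid (T_diag lam)) /\
  (rigid (T_diag lam) <-> uniformly_rigid (T_diag lam)) /\
  (uniformly_rigid (T_diag lam) <->
     exists theta : nat -> R,
       (forall k, lam k = cis (2 * PI * theta k)) /\
       LimInf_seq (fun n => real (Sup_seq (fun k =>
           Finite (Cmod (Cminus (cis (2 * PI * INR n * theta k)) (RtoC 1)))))) = Finite 0).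
Proof.
  assert (RG : recurrent (T_diag lam) -> GG lam) by (intro; apply PP_seq, R_PP; auto).
  assert (UG : uniformly_rigid (T_diag lam) -> GG lam) by (intro; apply PP_seq, UR_PP; auto).
  split; [|split]; split; intro H.
  - apply GG_Ri; auto.
  - apply Ri_R; auto.
  - apply GG_UR, RG, Ri_R; auto.
  - apply GG_Ri, UG; auto.
  - apply PP_IV, UR_PP; auto.
  - apply GG_UR, PP_seq, IV_PP; auto.
Qed.
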